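(* Let $G$ be a connected graph in $\mathcal{C}$ and $C$ an induced $C_5$ in $G$ with vertices $0,\dots,4$ in cyclic order. If $R\neq\emptyset$, then $|X_i|\le 2$ for every $i$.
   Context: $\mathcal{C}=\mathrm{Free}(\text{claw}, 4K_1, \text{5-wheel}, C_5\text{-twin}, P_5\text{-twin}, K_5-e)$, where $\mathrm{Free}(L)$ is the class of graphs with no induced subgraph isomorphic to a member of $L$; the claw is $K_{1,3}$; $4K_1$ is the edgeless graph on 4 vertices; the 5-wheel is $C_5$ plus a vertex adjacent to all five cycle vertices; the $C_5$-twin is $C_5$ plus a new vertex adjacent to one cycle vertex $v$ and both cycle-neighbours of $v$; the $P_5$-twin is a path $p_1p_2p_3p_4p_5$ plus a new vertex adjacent to exactly $p_2,p_3,p_4$; $K_5-e$ is $K_5$ minus one edge. Given an induced cycle $C$ of length 5 with vertices $0,\dots,4$ in cyclic order (indices taken mod 5): $R$ is the set of vertices outside $C$ with no neighbour in $C$; $X_j$ is the set of vertices outside $C$ whose neighbourhood in $C$ is exactly $\{j,j+1\}$; $Y_j$ is the set of vertices outside $C$ whose neighbourhood in $C$ is exactly $\{j,j+1,j+2,j+3\}$; $X=\bigcup_j X_j$, $Y=\bigcup_j Y_j$. *)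

(* Defs.v *)
From mathcomp Require Import all_boot.
Set Implicit Arguments. Unset Strict Implicit. Unset Printing Implicit Defensive.

Definition induced_sub (n : nat) (h : rel 'I_n) (T : finType) (e : rel T) : Prop :=
  exists f : 'I_n -> T, injective f /\ forall i j, e (f i) (f j) = h i j.

Definition cyc5 (i j : nat) : bool := (j == (i + 1) %% 5) || (i == (j + 1) %% 5).

Definition claw : rel 'I_4 := fun i j =>
  (i != j) && (((i : nat) == 0) || ((j : nat) == 0)).
Definition fourK1 : rel 'I_4 := fun _ _ => false.
Definition wheel5 : rel 'I_6 := fun i j =>
  if ((i : nat) < 5) && ((j : nat) < 5) then cyc5 i j
  else (i != j).
(* C5-twin: cycle on 0..4, vertex 5 adjacent to 0 and its cycle-neighbours 1, 4 *)
Definition c5twin : rel 'I_6 := fun i j =>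
  if ((i : nat) < 5) && ((j : nat) < 5) then cyc5 i j
  else if (i : nat) == 5 then (j : nat) \in [:: 0; 1; 4]
  else (i : nat) \in [:: 0; 1; 4].
Definition p5twin : rel 'I_6 := fun i j =>
  if ((i : nat) < 5) && ((j : nat) < 5) then ((j : nat) == i.+1) || ((i : nat) == j.+1)
  else if (i : nat) == 5 then (j : nat) \in [:: 1; 2; 3]
  else (i : nat) \in [:: 1; 2; 3].
Definition k5e : rel 'I_5 := fun i j =>
  (i != j) && ~~ ((((i : nat) == 0) && ((j : nat) == 1)) || (((i : nat) == 1) && ((j : nat) == 0))).

Definition in_classC (T : finType) (e : rel T) : Prop :=
  ~ induced_sub claw e /\ ~ induced_sub fourK1 e /\ ~ induced_sub wheel5 e /\
  ~ induced_sub c5twin e /\ ~ induced_sub p5twin e /\ ~ induced_sub k5e e.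

Definition simple_graph (T : finType) (e : rel T) : Prop := symmetric e /\ irreflexive e.
Definition connected (T : finType) (e : rel T) : Prop := forall x y, connect e x y.

Definition induced_C5 (T : finType) (e : rel T) (c : 'I_5 -> T) : Prop :=
  injective c /\ forall i j : 'I_5, e (c i) (c j) = cyc5 i j.

Definition outside (T : finType) (c : 'I_5 -> T) (v : T) : bool :=
  [forall k : 'I_5, c k != v].

Definition Rset (T : finType) (e : rel T) (c : 'I_5 -> T) : {set T} :=
  [set v | outside c v && [forall k : 'I_5, ~~ e v (c k)]].

Definition Xset (T : finType) (e : rel T) (c : 'I_5 -> T) (j : 'I_5) : {set T} :=
  [set v | outside c v &&
     [forall k : 'I_5, e v (c k) == (((k : nat) == j) || ((k : nat) == ((j : nat) + 1) %% 5))]].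

(* Main.v *)
Require Import Defs.
From mathcomp Require Import all_boot.

Section Core.
Variables (T : finType) (e : rel T).
Hypothesis esym : symmetric e.
Hypothesis eirr : irreflexive e.

Lemma mk_ind n (h : rel 'I_n) (s : seq T) x0 :
  size s = n -> uniq s ->
  (forall i j : 'I_n, e (nth x0 s i) (nth x0 s j) = h i j) -> induced_sub h e.
Proof.
move=> Hs Hu Hh; exists (fun i : 'I_n => nth x0 s i); split => // i j /eqP.
by rewrite nth_uniq ?Hs // => /eqP /val_inj.
Qed.

Lemma neq_e w u v : e u w -> ~~ e v w -> u != v.
Proof. by move=> H1 H2; apply/eqP => E; move: H2; rewrite -E H1. Qed.

Ltac solve_e :=
  match goal with
  | |- e ?a ?a = _ => by rewrite eirr
  | H : e ?a ?b = ?v |- e ?a ?b = _ => by rewrite H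
  | H : e ?b ?a = ?v |- e ?a ?b = _ => by rewrite esym H
  end.

Ltac solve_neq :=
  match goal with
  | H : is_true (?a != ?b) |- is_true (?a != ?b) => exact H
  | H : is_true (?b != ?a) |- is_true (?a != ?b) => by rewrite eq_sym
  end.

Ltac solve_uniq := rewrite /= !inE !negb_or;
  repeat (apply/andP; split); try solve_neq.

Lemma core (p s t r : T) (X : {set T}) :
  ~ induced_sub claw e -> ~ induced_sub fourK1 e -> ~ induced_sub k5e e ->
  e p t = true -> e s t = false -> e r p = false -> e r s = false -> e r t = false ->
  s != t -> r != s -> r != t ->
  (forall x, x \in X -> [/\ e x p = true, e x s = false, e x t = false, x != s & x != t]) ->
  #|X| <= 2.
Proof.
move=> Hcl H4 H5 ept est erp ers ert nst nrs nrt HX.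
rewrite leqNgt; apply/negP => /card_gt2P [a [b [c [[Ha Hb Hc] [nab nbc nca]]]]].
have adjr : forall x, x \in X -> e r x = true.
  move=> x /HX [exp exs ext nxs nxt].
  apply/negP => /negP /negbTE erx; apply: H4.
  have nrx : r != x by rewrite eq_sym; apply: (neq_e p); rewrite ?exp ?erp.
  apply: (@mk_ind 4 _ [:: r; x; s; t] r) => //; first by solve_uniq.
  by move=> [[|[|[|[|?]]]] ?] [[|[|[|[|?]]]] ?] //=; solve_e.
have npt : p != t by apply: (neq_e t); rewrite ?ept ?eirr.
have npr : p != r by apply: (neq_e t); rewrite ?ept ?ert.
have npx : forall x, x \in X -> p != x.
  by move=> x /HX [exp _ _ _ _]; rewrite eq_sym; apply: (neq_e p); rewrite ?exp ?eirr.
have ntx : forall x, x \in X -> t != x by move=> x /HX [_ _ _ _]; rewrite eq_sym.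
have nrx : forall x, x \in X -> r != x.
  by move=> x /HX [exp _ _ _ _]; rewrite eq_sym; apply: (neq_e p); rewrite ?exp ?erp.
have clq : forall x y, x \in X -> y \in X -> x != y -> e x y = true.
  move=> x y Hx Hy nxy; apply/negP => /negP /negbTE exy; apply: Hcl.
  have npx' := npx _ Hx; have npy := npx _ Hy; have ntx' := ntx _ Hx; have nty := ntx _ Hy.
  have [exp _ ext _ _] := HX _ Hx; have [eyp _ eyt _ _] := HX _ Hy.
  apply: (@mk_ind 4 _ [:: p; t; x; y] p) => //; first by solve_uniq.
  by move=> [[|[|[|[|?]]]] ?] [[|[|[|[|?]]]] ?] //=; solve_e.
apply: H5.
have eab := clq _ _ Ha Hb nab; have ebc := clq _ _ Hb Hc nbc; have eca := clq _ _ Hc Ha nca.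
have era := adjr _ Ha; have erb := adjr _ Hb; have erc := adjr _ Hc.
have [eap _ _ _ _] := HX _ Ha; have [ebp _ _ _ _] := HX _ Hb; have [ecp _ _ _ _] := HX _ Hc.
have npa := npx _ Ha; have npb := npx _ Hb; have npc := npx _ Hc.
have nra := nrx _ Ha; have nrb := nrx _ Hb; have nrc := nrx _ Hc.
apply: (@mk_ind 5 _ [:: p; r; a; b; c] p) => //; first by solve_uniq.
by move=> [[|[|[|[|[|?]]]]] ?] [[|[|[|[|[|?]]]]] ?] //=; solve_e.
Qed.

End Core.

Theorem claim14 (T : finType) (e : rel T) (c : 'I_5 -> T) :
  simple_graph e -> in_classC e -> connected e -> induced_C5 e c ->
  Rset e c != set0 ->
  forall i : 'I_5, #|Xset e c i| <= 2.
Proof.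
move=> [Hsym Hirr] [Hcl [H4 [_ [_ [_ H5]]]]] _ [Hinj Hc] /set0Pn [r].
rewrite inE => /andP [/forallP Hro /forallP Hr] i.
pose o k : 'I_5 := Ordinal (@ltn_pmod (i + k) 5 isT).
have Hi : i = o 0 by apply: val_inj; rewrite /= addn0 modn_small.
apply: (@core T e Hsym Hirr (c (o 0)) (c (o 2)) (c (o 4)) r) => //.
- by rewrite Hc; rewrite /o; clear Hi o; case: i => [[|[|[|[|[|//]]]]] ?].
- by rewrite Hc; rewrite /o; clear Hi o; case: i => [[|[|[|[|[|//]]]]] ?].
- by apply/negbTE/Hr.
- by apply/negbTE/Hr.
- by apply/negbTE/Hr.
- by apply/eqP => /Hinj /(congr1 val); rewrite /o; clear Hi o; case: i => [[|[|[|[|[|//]]]]] ?].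
- by rewrite eq_sym.
- by rewrite eq_sym.
- move=> x; rewrite inE => /andP [/forallP Hxo /forallP Hx].
  rewrite !(eq_sym x) !Hxo; split => //.
  + by move/eqP: (Hx (o 0)) => ->; rewrite Hi eqxx.
  + move/eqP: (Hx (o 2)) => ->; rewrite /o; clear Hi o Hx; case: i => [[|[|[|[|[|//]]]]] ?] //.
  + move/eqP: (Hx (o 4)) => ->; rewrite /o; clear Hi o Hx; case: i => [[|[|[|[|[|//]]]]] ?] //.
Qed.
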